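(* Let $\alpha \in \mathbb{R}_{>0}$ with $\alpha \neq 1$, and let $M_\alpha = \{f(\alpha) \mid f(x) \in \mathbb{N}_0[x,x^{-1}]\}$ as an additive monoid. Then $M_\alpha$ is not atomic if and only if the additive monoid $(\mathbb{N}_0[\alpha],+) = \{f(\alpha) \mid f(x) \in \mathbb{N}_0[x]\}$ is antimatter or finitely generated.
   Context: $\mathbb{N}_0[x,x^{-1}]$ denotes the semiring of Laurent polynomials with coefficients in $\mathbb{N}_0$. For a reduced additive monoid, an atom is a nonzero element not expressible as a sum of two nonzero elements; the monoid is atomic if every nonzero element is a sum of atoms, and antimatter if it has no atoms. *)

(* Defs.v *)
From mathcomp Require Import all_boot all_order all_algebra.
From mathcomp Require Import reals.
Set Implicit Arguments. Unset Strict Implicit. Unset Printing Implicit Defensive.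
Import Order.TTheory GRing.Theory Num.Theory.
Local Open Scope ring_scope.

Definition evalN0 {R : realType} (p : {poly nat}) (alpha : R) : R :=
  (map_poly (fun n : nat => (n%:R : R)) p).[alpha].

Definition N0_alpha {R : realType} (alpha : R) : R -> Prop :=
  fun x => exists p : {poly nat}, x = evalN0 p alpha.

(* M_alpha = { f(alpha) | f in N_0[x, x^{-1}] }; a Laurent polynomial with
   N_0 coefficients is x^{-n} p(x) with p in N_0[x] and n : nat. *)
Definition M_alpha {R : realType} (alpha : R) : R -> Prop :=
  fun x => exists (p : {poly nat}) (n : nat), x = evalN0 p alpha / alpha ^+ n.

Definition is_atom {R : realType} (S : R -> Prop) (a : R) : Prop :=
  S a /\ a <> 0 /\
  ~ (exists b c, S b /\ S c /\ b <> 0 /\ c <> 0 /\ a = b + c).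

Definition atomic {R : realType} (S : R -> Prop) : Prop :=
  forall x, S x -> x <> 0 ->
    exists l : seq R, (forall a, a \in l -> is_atom S a) /\ x = \sum_(a <- l) a.

Definition antimatter {R : realType} (S : R -> Prop) : Prop :=
  forall a, ~ is_atom S a.

Definition finitely_generated {R : realType} (S : R -> Prop) : Prop :=
  exists g : seq R, (forall a, a \in g -> S a) /\
    forall x, S x <-> exists c : seq nat,
      size c = size g /\ x = \sum_(i < size g) (nth 0%N c i)%:R * nth 0 g i.

(* Main.v *)
Require Import Defs.
From mathcomp Require Import all_boot all_order all_algebra.
From mathcomp Require Import reals.
From Stdlib Require Import Classical FunctionalExtensionality PropExtensionality.
From mathcomp Require Import zify.
Import Order.TTheory GRing.Theory Num.Theory.
Local Open Scope ring_scope.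

Section Work.
Variable R : realType.
Variable alpha : R.
Hypothesis ha : 0 < alpha.

Lemma an0 : alpha != 0. Proof. by rewrite gt_eqF. Qed.

Definition PS (s : seq int) : R := \sum_(e <- s) alpha ^ e.
Definition SE (E : pred int) (x : R) : Prop := exists s, all E s /\ x = PS s.

Lemma evalN0E p : evalN0 p alpha = (map_poly (GRing.natmul (1:R)) p).[alpha].
Proof. by []. Qed.

Lemma evalN0_seq p : exists s : seq nat, evalN0 p alpha = \sum_(e <- s) alpha ^+ e.
Proof.
elim/poly_ind: p => [|p c [s Hs]].
  by exists [::]; rewrite evalN0E rmorph0 horner0 big_nil.
exists (nseq c 0%N ++ map S s).
rewrite big_cat big_map /= big_nseq evalN0E rmorphD rmorphM /= map_polyX map_polyC /=.
rewrite hornerD hornerMX hornerC -evalN0E Hs mulr_suml addrC; congr (_ + _).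
  by apply: eq_bigr => i _; rewrite exprSr.
by elim: c => [|c IH] //; rewrite /= -IH expr0 mulrS.
Qed.

Lemma PS_nat s : PS (map Posz s) = \sum_(e <- s) alpha ^+ e.
Proof. by rewrite /PS big_map. Qed.

Lemma PS_cons e s : PS (e :: s) = alpha ^ e + PS s.
Proof. by rewrite /PS big_cons. Qed.

Lemma PS_cat s t : PS (s ++ t) = PS s + PS t.
Proof. by rewrite /PS big_cat. Qed.

Lemma SE0 E : SE E 0.
Proof. by exists [::]; rewrite /PS big_nil. Qed.

Lemma SEpow (E : pred int) e : E e -> SE E (alpha ^ e).
Proof. by move=> He; exists [:: e]; rewrite /= He /PS big_seq1. Qed.

Lemma SEadd E x y : SE E x -> SE E y -> SE E (x + y).
Proof.
move=> [s [Hs ->]] [t [Ht ->]]; exists (s ++ t).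
by rewrite all_cat Hs Ht PS_cat.
Qed.

Lemma SE_ind (E : pred int) (P : R -> Prop) :
  P 0 -> (forall x y, P x -> P y -> P (x + y)) -> (forall e, E e -> P (alpha ^ e)) ->
  forall x, SE E x -> P x.
Proof.
move=> P0 PD Pe x [s [Hs ->]]; elim: s Hs => [|e s IH] /=.
  by rewrite /PS big_nil.
by move=> /andP[He Hs]; rewrite PS_cons; apply: PD; [apply: Pe | apply: IH].
Qed.

Lemma evalN0_X m : evalN0 'X^m alpha = alpha ^+ m.
Proof. by rewrite evalN0E map_polyXn hornerXn. Qed.

Lemma evalN0_D p q : evalN0 (p + q) alpha = evalN0 p alpha + evalN0 q alpha.
Proof. by rewrite !evalN0E rmorphD hornerD. Qed.

Lemma evalN0_MX p m : evalN0 (p * 'X^m) alpha = evalN0 p alpha * alpha ^+ m.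
Proof. by rewrite !evalN0E rmorphM /= map_polyXn hornerM hornerXn. Qed.

Lemma evalN0_0 : evalN0 0 alpha = 0.
Proof. by rewrite evalN0E rmorph0 horner0. Qed.

Lemma Nchar x : N0_alpha alpha x <-> SE (fun e => 0 <= e) x.
Proof.
split.
  move=> [p ->]; have [s Hs] := evalN0_seq p; exists (map Posz s).
  by rewrite PS_nat Hs all_map; split=> //; apply/allP.
apply: SE_ind.
- by exists 0; rewrite evalN0_0.
- by move=> x1 y1 [p ->] [q ->]; exists (p + q); rewrite evalN0_D.
- by case=> // m _; exists 'X^m; rewrite evalN0_X.
Qed.

Lemma Mchar x : M_alpha alpha x <-> SE predT x.
Proof.
split.
  move=> [p [n ->]]; have [s Hs] := evalN0_seq p.
  exists (map (fun e : nat => e%:Z - n%:Z) s); split; first exact: all_predT.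
  rewrite /PS big_map Hs mulr_suml; apply: eq_bigr => e _.
  by rewrite expfzDr ?an0 // -exprnN.
apply: SE_ind.
- by exists 0, 0%N; rewrite evalN0_0 mul0r.
- move=> x1 y1 [p [n ->]] [q [m ->]]; exists (p * 'X^m + q * 'X^n), (n + m)%N.
  rewrite evalN0_D !evalN0_MX addf_div ?expf_neq0 ?an0 //.
  by rewrite exprD.
- case=> m _.
    by exists 'X^m, 0%N; rewrite evalN0_X expr0 divr1.
  exists 'X^0, m.+1; rewrite evalN0_X expr0 div1r NegzE.
  by rewrite -exprnN.
Qed.

Definition dec (S : R -> Prop) : Prop :=
  exists b c, S b /\ S c /\ b <> 0 /\ c <> 0 /\ 1 = b + c.

Lemma PS_ge0 s : 0 <= PS s.
Proof. by apply: sumr_ge0 => e _; apply: exprz_ge0; apply: ltW. Qed.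

Lemma PS_gt0 s : s != [::] -> 0 < PS s.
Proof.
case: s => // e s _; rewrite PS_cons; apply: ltr_pwDl; last exact: PS_ge0.
exact: exprz_gt0.
Qed.

Lemma PS_mem e s : e \in s -> alpha ^ e <= PS s.
Proof.
move=> /perm_to_rem Hp; rewrite /PS (perm_big _ Hp) big_cons lerDl.
exact: PS_ge0.
Qed.

Arguments PS_mem {e s}.
Lemma PS_scale k s : alpha ^ k * PS s = PS (map (fun e => e + k) s).
Proof.
rewrite /PS big_map mulr_sumr; apply: eq_bigr => e _.
by rewrite expfzDr ?an0 // mulrC.
Qed.

Lemma SE_scale (E : pred int) k x :
  (forall a b, E a -> E b -> E (a + b)) -> E k -> SE E x -> SE E (alpha ^ k * x).
Proof.
move=> hE hk [s [Hs ->]]; exists (map (fun e => e + k) s); split; last exact: PS_scale.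
by rewrite all_map; apply/allP => e He /=; apply: hE => //; move/allP: Hs; apply.
Qed.

Lemma atom_pow (E : pred int) a : is_atom (SE E) a -> exists e, E e /\ a = alpha ^ e.
Proof.
move=> [[s [Hs Ha]] [Hn Hnd]]; case: s Hs Ha => [|e s] /=.
  by move=> _ Ha; rewrite /PS big_nil in Ha.
move=> /andP[He Hs]; rewrite PS_cons => Ha; exists e; split=> //.
case: s Hs Ha => [|f s] Hs Ha; first by rewrite /PS big_nil addr0 in Ha.
exfalso; apply: Hnd; exists (alpha ^ e), (PS (f :: s)); split; first exact: SEpow.
split; first by exists (f :: s).
split; first by apply/eqP; apply: expfz_neq0; exact: an0.
split=> //; apply/eqP; rewrite gt_eqF //; exact: PS_gt0.
Qed.

Arguments atom_pow {E a}.
Lemma expz0 : alpha ^ (0:int) = 1. Proof. exact: expr0z. Qed.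

Lemma dec_anti (E : pred int) : (forall a b, E a -> E b -> E (a + b)) ->
  dec (SE E) -> antimatter (SE E).
Proof.
move=> hE [b [c [Hb [Hc [b0 [c0 H1]]]]]] a Ha.
have [e [Ee Ea]] := atom_pow Ha; subst a.
case: Ha => _ [_ Hnd]; apply: Hnd.
exists (alpha ^ e * b), (alpha ^ e * c).
split; first exact: SE_scale.
split; first exact: SE_scale.
have ne : alpha ^ e != 0 by apply: expfz_neq0; exact: an0.
split; first by apply/eqP; rewrite mulf_neq0 //; apply/eqP.
split; first by apply/eqP; rewrite mulf_neq0 //; apply/eqP.
by rewrite -mulrDr -H1 mulr1.
Qed.

Lemma anti_dec (E : pred int) : E 0 -> antimatter (SE E) -> dec (SE E).
Proof.
move=> E0 Ha; apply: NNPP => Hd; apply: (Ha 1); split.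
  by rewrite -expz0; apply: SEpow.
by split; [apply/eqP; exact: oner_neq0 | exact: Hd].
Qed.

Lemma step1 : ~ atomic (SE predT) <-> dec (SE predT).
Proof.
split.
  move=> Hna; apply: NNPP => Hd; apply: Hna => x [s [_ ->]] _.
  exists (map (fun e => alpha ^ e) s); split; last by rewrite big_map.
  move=> a /mapP [e _ ->]; split; first exact: SEpow.
  split; first by apply/eqP; apply: expfz_neq0; exact: an0.
  move=> [b [c [Hb [Hc [b0 [c0 He]]]]]]; apply: Hd.
  have ne : alpha ^ (- e) != 0 by apply: expfz_neq0; exact: an0.
  exists (alpha ^ (- e) * b), (alpha ^ (- e) * c).
  split; first exact: SE_scale.
  split; first exact: SE_scale.
  split; first by apply/eqP; rewrite mulf_neq0 //; apply/eqP.
  split; first by apply/eqP; rewrite mulf_neq0 //; apply/eqP.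
  by rewrite -mulrDr -He -expfzDr ?an0 // addNr expz0.
move=> Hd Hat; have Han := @dec_anti predT (fun _ _ _ _ => erefl) Hd.
have H1S : SE predT 1 by rewrite -expz0; apply: SEpow.
have H10 : (1:R) <> 0 by apply/eqP; exact: oner_neq0.
have [l [Hl H1]] := Hat 1 H1S H10.
case: l Hl H1 => [|a l] Hl H1; first by rewrite big_nil in H1; move: (@oner_neq0 R); rewrite H1 eqxx.
by apply: (Han a); apply: Hl; rewrite mem_head.
Qed.

Definition nn : pred int := fun e => 0 <= e.

Lemma lt1_exp e : alpha ^ e < 1 -> (alpha < 1 -> 0 < e) /\ (1 < alpha -> e < 0).
Proof.
move=> H; split => Ha.
  case: e H => [[|m]|m] H //; first by rewrite expz0 ltxx in H.
  rewrite NegzE -exprnN invf_lt1 ?exprn_gt0 // in H.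
  have := exprn_ilt1 m.+1 (ltW ha) Ha; rewrite /= => H2.
  by have := lt_trans H H2; rewrite ltxx.
case: e H => [[|m]|m] H //; first by rewrite expz0 ltxx in H.
by have := exprn_egt1 m.+1 Ha; rewrite /= => H2; have := lt_trans H H2; rewrite ltxx.
Qed.

Arguments lt1_exp {e}.
Lemma low_bound (s : seq int) : exists D : nat, all (fun e => - (D%:Z) <= e) s.
Proof.
elim: s => [|e s [D HD]]; first by exists 0%N.
exists (D + `|e|)%N; rewrite /= ; apply/andP; split; first by lia.
by apply: sub_all HD => f /=; lia.
Qed.

Lemma up_bound (s : seq int) : exists D : nat, all (fun e => e < D%:Z) s.
Proof.
elim: s => [|e s [D HD]]; first by exists 0%N.
exists (D + `|e|).+1%N; rewrite /= ; apply/andP; split; first by lia.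
by apply: sub_all HD => f /=; lia.
Qed.

Lemma decM_cases : alpha != 1 -> dec (SE predT) -> dec (SE nn) \/
  (exists (D : nat) (t : seq int), all (fun e => 0 <= e < D%:Z) t /\ alpha ^+ D = PS t).
Proof.
move=> a1 [b [c [[sb [_ Eb]] [[sc [_ Ec]] [b0 [c0 H1]]]]]].
have bp : 0 < b by rewrite lt_def Eb PS_ge0 andbT; apply/eqP; rewrite -Eb.
have cp : 0 < c by rewrite lt_def Ec PS_ge0 andbT; apply/eqP; rewrite -Ec.
have Hall : forall e, e \in sb ++ sc -> alpha ^ e < 1.
  move=> e; rewrite mem_cat => /orP [] He.
    by apply: (le_lt_trans (PS_mem He)); rewrite -Eb H1 ltrDl.
  by apply: (le_lt_trans (PS_mem He)); rewrite -Ec H1 ltrDr.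
case: (ltgtP alpha 1) => Ha; last by rewrite Ha eqxx in a1.
  left; exists b, c; split.
    exists sb; split=> //; apply/allP => e He.
    have He' : e \in sb ++ sc by rewrite mem_cat He.
    apply: ltW; exact: (proj1 (lt1_exp (Hall e He')) Ha).
  split.
    exists sc; split=> //; apply/allP => e He.
    have He' : e \in sb ++ sc by rewrite mem_cat He orbT.
    apply: ltW; exact: (proj1 (lt1_exp (Hall e He')) Ha).
  by [].
right; have [D HD] := low_bound (sb ++ sc).
exists D, (map (fun e => e + D%:Z) (sb ++ sc)); split.
  rewrite all_map; apply/allP => e He /=.
  have := proj2 (lt1_exp (Hall e He)) Ha; move/allP: HD => /(_ e He) /= HD'.
  lia.
by rewrite -PS_scale PS_cat -Eb -Ec -H1 mulr1.
Qed.

Lemma SE_natmul (E : pred int) n y : SE E y -> SE E (n%:R * y).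
Proof.
move=> Hy; rewrite mulr_natl; elim: n => [|n IH]; first by rewrite mulr0n; apply: SE0.
by rewrite mulrS; apply: SEadd.
Qed.

Lemma rel_fg D t : all (fun e => 0 <= e < D%:Z) t -> alpha ^+ D = PS t ->
  finitely_generated (SE nn).
Proof.
move=> Ht HD.
pose Sp x := exists f : nat -> nat, x = \sum_(i < D) (f i)%:R * alpha ^+ i.
have Sp0 : Sp 0 by exists (fun _ => 0%N); rewrite big1 // => i _; rewrite mul0r.
have SpD : forall x y, Sp x -> Sp y -> Sp (x + y).
  move=> x y [f ->] [g ->]; exists (fun i => f i + g i)%N.
  by rewrite -big_split; apply: eq_bigr => i _; rewrite natrD mulrDl.
have Sppow : forall k, Sp (alpha ^+ k).
  elim/ltn_ind => k IH; case: (ltnP k D) => hk.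
    exists (fun i => (i == k) : nat).
    rewrite (bigD1 (Ordinal hk)) //= eqxx mul1r big1 ?addr0 // => i /negbTE.
    by rewrite -val_eqE /= => ->; rewrite mul0r.
  rewrite -(subnK hk) exprD HD /PS mulr_sumr.
  elim: t Ht {HD} => [|e t IHt] /=; first by rewrite big_nil.
  move=> /andP [He Ht]; rewrite big_cons; apply: SpD; last exact: IHt.
  case: e He => m // Hm.
  rewrite -exprD; apply: IH; lia.
exists (mkseq (fun i => alpha ^+ i) D); split.
  move=> a /mapP [i _ ->]; exact: (@SEpow nn (Posz i)).
move=> x; rewrite size_mkseq; split.
  move=> Hx; have [f ->] : Sp x.
    apply: (@SE_ind nn Sp) Hx => //; case=> // m _; exact: Sppow.
  exists (mkseq f D); rewrite size_mkseq; split=> //.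
  by apply: eq_bigr => i _; rewrite !nth_mkseq.
move=> [c [_ ->]]; apply: big_ind => //; first exact: SE0.
  exact: SEadd.
move=> i _; rewrite nth_mkseq //; apply: SE_natmul; exact: (@SEpow nn (Posz i)).
Qed.

Definition Low (D : nat) (x : R) := exists s, all (fun e => 0 <= e < D%:Z) s /\ x = PS s.

Lemma Low_mono D D' x : (D <= D')%N -> Low D x -> Low D' x.
Proof.
move=> hD [s [Hs ->]]; exists s; split=> //; apply: sub_all Hs => e /=; lia.
Qed.

Lemma fg_dec : alpha != 1 -> finitely_generated (SE nn) -> dec (SE predT).
Proof.
move=> a1 [g [Hg Hx]].
have [D HD] : exists D, forall a, a \in g -> Low D a.
  elim: g Hg {Hx} => [|a g IH] Hg; first by exists 0%N.
  have [D HD] := IH (fun b Hb => Hg b ((mem_behead (s := a :: g) Hb))).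
  have [s [Hs Ha]] := Hg a (mem_head _ _).
  have [B HB] := up_bound s.
  exists (maxn D B) => b; rewrite in_cons => /orP [/eqP -> | Hb].
    exists s; split=> //; apply/allP => e He.
    move/allP: Hs => /(_ e He); move/allP: HB => /(_ e He) /=; rewrite /nn; lia.
  by apply: Low_mono (HD b Hb); apply: leq_maxl.
have LowD : forall x y, Low D x -> Low D y -> Low D (x + y).
  move=> x y [s [Hs ->]] [s' [Hs' ->]]; exists (s ++ s').
  by rewrite all_cat Hs Hs' PS_cat.
have Low0 : Low D 0 by exists [::]; rewrite /PS big_nil.
have LowM : forall n y, Low D y -> Low D (n%:R * y).
  move=> n y Hy; rewrite mulr_natl; elim: n => [|n IH]; first by rewrite mulr0n.
  by rewrite mulrS; apply: LowD.
have [s [Hs HaD]] : Low D (alpha ^+ D).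
  have [c [_ ->]] := proj1 (Hx (alpha ^+ D)) (@SEpow nn (Posz D) erefl).
  apply: big_ind => // i _; apply: LowM; apply: HD; apply: mem_nth; exact: ltn_ord.
have aD0 : alpha ^+ D != 0 by rewrite expf_neq0 // an0.
case: s Hs HaD => [|e s] /=; first by rewrite /PS big_nil => _ H; rewrite H eqxx in aD0.
move=> /andP [He Hs]; rewrite PS_cons => HaD.
have nD : alpha ^ (- (D%:Z)) != 0 by apply: expfz_neq0; exact: an0.
exists (alpha ^ (- (D%:Z)) * alpha ^ e), (alpha ^ (- (D%:Z)) * PS s).
split; first by apply: SE_scale => //; exact: SEpow.
split; first by apply: SE_scale => //; exists s; split=> //; exact: all_predT.
split; first by apply/eqP; rewrite mulf_neq0 // expfz_neq0 // an0.
split.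
  case: s {Hs} HaD => [|f s] HaD; last first.
    by apply/eqP; rewrite mulf_neq0 // gt_eqF // PS_gt0.
  rewrite /PS big_nil addr0 in HaD.
  case: e He HaD => // m /andP [_ Hm] HaD.
  have := ieexprIn ha a1 HaD; move=> Em; rewrite Em in Hm; by rewrite ltxx in Hm.
rewrite -mulrDr -HaD -exprnN mulVf //.
Qed.
End Work.

Theorem proposition3p4 (R : realType) (alpha : R) :
  0 < alpha -> alpha != 1 ->
  (~ atomic (M_alpha alpha) <->
   (antimatter (N0_alpha alpha) \/ finitely_generated (N0_alpha alpha))).
Proof.
move=> ha a1.
have EM : M_alpha alpha = SE R alpha predT.
  apply: functional_extensionality => x; apply: propositional_extensionality.
  exact: Mchar.
have EN : N0_alpha alpha = SE R alpha nn.
  apply: functional_extensionality => x; apply: propositional_extensionality.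
  exact: Nchar.
have hnn : forall a b : int, nn a -> nn b -> nn (a + b).
  by move=> a b; rewrite /nn; apply: addr_ge0.
rewrite EM EN (step1 _ _ ha); split.
  move=> Hd; case: (decM_cases _ _ ha a1 Hd) => [HdN | [D [t [Ht HD]]]].
    by left; exact: (@dec_anti R alpha ha nn hnn HdN).
  by right; exact: (@rel_fg R alpha ha D t Ht HD).
case=> [Han | Hfg]; last exact: (fg_dec _ _ ha a1 Hfg).
have [b [c [[sb [_ Eb]] [[sc [_ Ec]] rest]]]] := @anti_dec R alpha nn erefl Han.
exists b, c; split; first by exists sb; split=> //; exact: all_predT.
split; first by exists sc; split=> //; exact: all_predT.
exact: rest.
Qed.
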